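(* For $n\ge 0$, let $CP_n$ be the clawed path with respect to a path of length $n$. Then $M_2(CP_n)\simeq S^{2n+1}$.
   Context: A path of length $n$ has $n$ edges and $n+1$ vertices (for $n=0$ it is a single vertex). For a graph $G$ of maximum degree at most $3$, the clawed graph $CG$ is obtained by subdividing every edge of $G$ (replacing $\{u,v\}$ by a new vertex $w$ and edges $\{u,w\},\{w,v\}$) and then attaching new leaves to every original vertex so that every original vertex has degree exactly $3$; $CP_n$ is the clawed graph of the path of length $n$ (so $CP_0=K_{1,3}$). $M_2(G)$ is the simplicial complex whose vertices are the edges of $G$ and whose faces are the $2$-matchings of $G$ (edge sets in which every vertex has degree at most $2$). *)

(* Defs.v *)
From HB Require Import structures.
From mathcomp Require Import all_boot all_order all_algebra.
From mathcomp Require Import reals.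
Set Implicit Arguments. Unset Strict Implicit. Unset Printing Implicit Defensive.
Import Order.TTheory GRing.Theory Num.Theory.
Local Open Scope ring_scope.

Definition edges (T : finType) (adj : rel T) : {set {set T}} :=
  [set e : {set T} | [exists x, exists y, adj x y && (e == [set x; y])]].

Definition deg (T : finType) (adj : rel T) (v : T) : nat := #|[set w | adj v w]|.

Definition path_adj (n : nat) : rel 'I_n.+1 :=
  fun i j => ((i : nat).+1 == j) || ((j : nat).+1 == i).

(* Clawed graph CG of a graph G of maximum degree <= 3.
   Vertex type: original vertices, subdivision vertices (one for each
   edge e of G, indexed by e itself), and leaves (v, i) attached to the
   original vertex v for i < 3 - deg v.  Elements of the ambient type that
   are not vertices of CG (Sub e with e not an edge, Leaf (v,i) with
   i >= 3 - deg v) are isolated and play no role for the edge set. *)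
Definition cg_vertex (T : finType) : finType :=
  (T + {set T} + (T * 'I_3))%type.

Definition clawed_adj (T : finType) (adj : rel T) : rel (cg_vertex T) :=
  fun x y =>
    match x, y with
    | inl (inl u), inl (inr e) => (u \in e) && (e \in edges adj)
    | inl (inr e), inl (inl u) => (u \in e) && (e \in edges adj)
    | inl (inl u), inr (v, i) => (u == v) && ((i : nat) < 3 - deg adj v)%N
    | inr (v, i), inl (inl u) => (u == v) && ((i : nat) < 3 - deg adj v)%N
    | _, _ => false
    end.

Definition CP_adj (n : nat) : rel (cg_vertex 'I_n.+1) := clawed_adj (@path_adj n).

Definition two_matching (T : finType) (adj : rel T) (F : {set {set T}}) : bool :=
  (F \subset edges adj) && [forall v : T, #|[set e in F | v \in e]| <= 2]%N.

Definition M2 (T : finType) (adj : rel T) : {set {set T}} -> bool :=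
  two_matching adj.

Section Topo.
Variable R : realType.

Definition vdist (I : finType) (x y : I -> R) : R := \sum_(i : I) `|x i - y i|.

Definition maps_into (I J : finType) (A : (I -> R) -> Prop) (B : (J -> R) -> Prop)
  (f : (I -> R) -> (J -> R)) : Prop := forall x, A x -> B (f x).

Definition cont_on (I J : finType) (A : (I -> R) -> Prop) (f : (I -> R) -> (J -> R)) : Prop :=
  forall x, A x -> forall e : R, 0 < e -> exists2 d : R, 0 < d &
    forall y, A y -> vdist x y < d -> vdist (f x) (f y) < e.

Definition homotopic (I J : finType) (A : (I -> R) -> Prop) (B : (J -> R) -> Prop)
  (f g : (I -> R) -> (J -> R)) : Prop :=
  exists H : R -> (I -> R) -> (J -> R),
    [/\ (forall t x, 0 <= t <= 1 -> A x -> B (H t x)),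
        (forall t x, 0 <= t <= 1 -> A x -> forall e : R, 0 < e ->
           exists2 d : R, 0 < d & forall s y, 0 <= s <= 1 -> A y ->
             `|t - s| < d -> vdist x y < d -> vdist (H t x) (H s y) < e),
        (forall x, A x -> H 0 x = f x) &
        (forall x, A x -> H 1 x = g x)].

Definition homotopy_equiv (I J : finType) (A : (I -> R) -> Prop) (B : (J -> R) -> Prop) : Prop :=
  exists (f : (I -> R) -> (J -> R)) (g : (J -> R) -> (I -> R)),
    [/\ cont_on A f /\ maps_into A B f,
        cont_on B g /\ maps_into B A g,
        homotopic A A (g \o f) id &
        homotopic B B (f \o g) id].

Definition realization (V : finType) (face : {set V} -> bool) : (V -> R) -> Prop :=
  fun x => [/\ forall v, 0 <= x v, \sum_(v : V) x v = 1 & face [set v | x v != 0]].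

Definition sphere (m : nat) : ('I_m.+1 -> R) -> Prop :=
  fun y => \sum_(i < m.+1) y i ^+ 2 = 1.

End Topo.

(* Main.v *)
Require Import Defs.
From mathcomp Require Import all_boot all_order all_algebra.
From mathcomp Require Import reals.
From HB Require Import structures.
From mathcomp Require Import ring lra zify.
Set Implicit Arguments. Unset Strict Implicit. Unset Printing Implicit Defensive.
Import Order.TTheory GRing.Theory Num.Theory.
Local Open Scope ring_scope.

Section Cont.
Variable R : realType.

Lemma abs_cases (x : R) : (0 <= x /\ `|x| = x) \/ (x < 0 /\ `|x| = - x).
Proof.
case: (lerP 0 x) => h; [left; split=> //; exact: ger0_norm|right; split=> //].
exact: ltr0_norm.
Qed.

Lemma abs_ge (x : R) : x <= `|x| /\ - x <= `|x|.
Proof. case: (abs_cases x) => [][h ->]; lra. Qed.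

Lemma abs_le (x k : R) : x <= k -> - x <= k -> `|x| <= k.
Proof. case: (abs_cases x) => [][h ->]; lra. Qed.

Lemma abs_lt (x k : R) : x < k -> - x < k -> `|x| < k.
Proof. case: (abs_cases x) => [][h ->]; lra. Qed.

Variable I : finType.
Implicit Types (A : (I -> R) -> Prop).

Definition ctsA A (h : (I -> R) -> R) : Prop :=
  forall x, A x -> forall e : R, 0 < e -> exists2 d : R, 0 < d &
    forall y, A y -> vdist x y < d -> `|h x - h y| < e.

Lemma vdist_ge0 (x y : I -> R) : 0 <= vdist x y.
Proof. by apply: sumr_ge0 => i _; exact: normr_ge0. Qed.

Lemma vdist_coord (x y : I -> R) i : `|x i - y i| <= vdist x y.
Proof.
rewrite /vdist (bigD1 i) //= lerDl; apply: sumr_ge0 => j _; exact: normr_ge0.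
Qed.

Lemma ctsA_proj A i : ctsA A (fun x => x i).
Proof.
move=> x _ e e0; exists e => // y _ h; exact: le_lt_trans (vdist_coord x y i) h.
Qed.

Lemma ctsA_const A c : ctsA A (fun _ => c).
Proof. by move=> x _ e e0; exists 1 => // y _ _; rewrite subrr normr0. Qed.

Lemma ctsA_add A f g : ctsA A f -> ctsA A g -> ctsA A (fun x => f x + g x).
Proof.
move=> hf hg x Ax e e0.
have e2 : 0 < e / 2 by lra.
have [d1 d10 H1] := hf x Ax _ e2; have [d2 d20 H2] := hg x Ax _ e2.
exists (Num.min d1 d2); first by rewrite lt_min d10 d20.
move=> y Ay; rewrite lt_min => /andP[h1 h2].
have := H1 y Ay h1; have := H2 y Ay h2.
have := ler_normD (f x - f y) (g x - g y).
have -> : f x + g x - (f y + g y) = (f x - f y) + (g x - g y) by ring.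
lra.
Qed.

Lemma ctsA_opp A f : ctsA A f -> ctsA A (fun x => - f x).
Proof.
move=> hf x Ax e e0; have [d d0 H] := hf x Ax e e0; exists d => // y Ay h.
by rewrite -opprD normrN; exact: H.
Qed.

Lemma ctsA_mul A f g : ctsA A f -> ctsA A g -> ctsA A (fun x => f x * g x).
Proof.
move=> hf hg x Ax e e0.
set a := f x; set b := g x.
have K0 : 0 < `|a| + `|b| + 2 by have := normr_ge0 a; have := normr_ge0 b; lra.
set K := `|a| + `|b| + 2 in K0.
have eK0 : 0 < e / K by exact: divr_gt0.
have eK : 0 < Num.min 1 (e / K) by rewrite lt_min ltr01 eK0.
have [d1 d10 H1] := hf x Ax _ eK; have [d2 d20 H2] := hg x Ax _ eK.
exists (Num.min d1 d2); first by rewrite lt_min d10 d20.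
move=> y Ay; rewrite lt_min => /andP[h1 h2].
have {h1}h1 := H1 y Ay h1; have {h2}h2 := H2 y Ay h2.
move: h1 h2; rewrite !lt_min => /andP[u1 v1] /andP[u2 v2].
have -> : a * b - f y * g y = (a - f y) * b + f y * (b - g y) by ring.
apply: (le_lt_trans (ler_normD _ _)); rewrite !normrM.
have hy : `|f y| <= `|a| + 1.
  have := ler_normD a (f y - a); have -> : a + (f y - a) = f y by ring.
  by rewrite distrC; lra.
have hK : e / K * K = e by rewrite divfK // gt_eqF.
have p1 : `|a - f y| * `|b| <= e / K * `|b|.
  by apply: ler_wpM2r; [exact: normr_ge0|exact: ltW].
have p2 : `|f y| * `|b - g y| <= (`|a| + 1) * (e / K).
  apply: ler_pM; [exact: normr_ge0|exact: normr_ge0|exact: hy|exact: ltW].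
have E : e / K * `|b| + (`|a| + 1) * (e / K) = e - e / K.
  by rewrite /K; field; exact: (lt0r_neq0 K0).
lra.
Qed.

Lemma ctsA_inv A f : ctsA A f -> (forall x, A x -> f x != 0) ->
  ctsA A (fun x => (f x)^-1).
Proof.
move=> hf nz x Ax e e0.
set a := f x.
have a0 : 0 < `|a| by rewrite normr_gt0 nz.
have c0 : 0 < Num.min (`|a| / 2) (e * (`|a| * `|a|) / 2).
  rewrite lt_min; apply/andP; split; apply: divr_gt0 => //.
  by apply: mulr_gt0 => //; exact: mulr_gt0.
have [d d0 H] := hf x Ax _ c0.
exists d => // y Ay h; have := H y Ay h; rewrite lt_min => /andP[h1 h2].
have hy : `|a| / 2 <= `|f y|.
  have := ler_normD (a - f y) (f y); have -> : a - f y + f y = a by ring.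
  lra.
have a20 : 0 < `|a| / 2 by exact: divr_gt0.
have fy0 : 0 < `|f y| by lra.
have fyn : f y != 0 by rewrite -normr_gt0.
have an : a != 0 by exact: nz.
have -> : a^-1 - (f y)^-1 = (f y - a) / (a * f y).
  by field; rewrite an fyn.
rewrite normrM normfV normrM.
rewrite ltr_pdivrMr ?mulr_gt0 // mulrC.
have : `|a| * `|f y| >= `|a| * (`|a| / 2).
  by apply: ler_wpM2l => //; exact: ltW.
have E : e * (`|a| * (`|a| / 2)) = e * (`|a| * `|a|) / 2 by ring.
have -> : `|f y - a| = `|a - f y| by rewrite distrC.
move=> hh; apply: (lt_le_trans h2); rewrite -E [X in _ <= X]mulrC; apply: ler_wpM2l => //; exact: ltW.
Qed.

Lemma sqrt_diff (a b : R) : 0 < a -> 0 <= b ->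
  `|Num.sqrt a - Num.sqrt b| <= `|a - b| / Num.sqrt a.
Proof.
move=> a0 b0.
have sa : 0 < Num.sqrt a by rewrite sqrtr_gt0.
have sb : 0 <= Num.sqrt b by rewrite sqrtr_ge0.
have E : a - b = (Num.sqrt a - Num.sqrt b) * (Num.sqrt a + Num.sqrt b).
  by rewrite mulrDr !mulrBl -!expr2 !sqr_sqrtr //; [ring|exact: ltW].
rewrite E normrM ler_pdivlMr // ler_wpM2l ?normr_ge0 //.
rewrite ger0_norm; lra.
Qed.

Lemma ctsA_sqrt A f : ctsA A f -> (forall x, A x -> 0 < f x) ->
  ctsA A (fun x => Num.sqrt (f x)).
Proof.
move=> hf pos x Ax e e0.
have sa : 0 < Num.sqrt (f x) by rewrite sqrtr_gt0 pos.
have [d d0 H] := hf x Ax (e * Num.sqrt (f x)) (mulr_gt0 e0 sa).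
exists d => // y Ay h.
apply: le_lt_trans (sqrt_diff (pos _ Ax) (ltW (pos _ Ay))) _.
by rewrite ltr_pdivrMr //; exact: H.
Qed.

Lemma ctsA_abs A f : ctsA A f -> ctsA A (fun x => `|f x|).
Proof.
move=> hf x Ax e e0; have [d d0 H] := hf x Ax e e0; exists d => // y Ay h.
exact: le_lt_trans (ler_dist_dist _ _) (H y Ay h).
Qed.

Lemma ctsA_ext A f g : (forall x, f x = g x) -> ctsA A f -> ctsA A g.
Proof.
move=> E hf x Ax e e0; have [d d0 H] := hf x Ax e e0; exists d => // y Ay h.
by rewrite -!E; exact: H.
Qed.

Lemma ctsA_sum A (J : finType) (F : J -> (I -> R) -> R) :
  (forall j, ctsA A (F j)) -> ctsA A (fun x => \sum_(j : J) F j x).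
Proof.
move=> hF.
have : ctsA A (fun x => \sum_(j <- enum J) F j x).
  elim: (enum J) => [|j s IH].
    by apply: (ctsA_ext (f := fun _ => 0)); [move=> x; rewrite big_nil|exact: ctsA_const].
  apply: (ctsA_ext (f := fun x => F j x + \sum_(j <- s) F j x)).
    by move=> x; rewrite big_cons.
  exact: ctsA_add.
by apply: ctsA_ext => x; rewrite big_enum.
Qed.

Lemma fin_delta (J : finType) (Q : J -> R -> Prop) :
  (forall j d d', 0 < d' <= d -> Q j d -> Q j d') ->
  (forall j, exists2 d, 0 < d & Q j d) ->
  exists2 d, 0 < d & forall j, Q j d.
Proof.
move=> mono ex.
suff : exists2 d, 0 < d & forall j, j \in enum J -> Q j d.
  by case=> d d0 H; exists d => // j; apply: H; rewrite mem_enum.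
elim: (enum J) => [|j s [d d0 H]]; first by exists 1.
have [d1 d10 H1] := ex j.
exists (Num.min d d1); first by rewrite lt_min d0 d10.
move=> k; rewrite inE => /orP[/eqP->|ks].
  by apply: (mono _ d1) => //; rewrite lt_min d0 d10 /= ge_min lexx orbT.
by apply: (mono _ d) => //; [rewrite lt_min d0 d10 /= ge_min lexx|exact: H].
Qed.

Lemma cont_of_coords (J : finType) A (f : (I -> R) -> (J -> R)) :
  (forall j, ctsA A (fun x => f x j)) -> cont_on A f.
Proof.
move=> hf x Ax e e0.
have eJ : 0 < e / (#|J|%:R + 1) by apply: divr_gt0 => //; rewrite ltr_wpDl.
pose Q := fun j d => forall y, A y -> vdist x y < d ->
     `|f x j - f y j| < e / (#|J|%:R + 1).
have mono : forall j d d', 0 < d' <= d -> Q j d -> Q j d'.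
  by move=> j d1 d2 /andP[_ le] Hj y Ay h; apply: Hj => //; exact: lt_le_trans h le.
have [d d0 H] := @fin_delta J Q mono (fun j => hf j x Ax _ eJ).
exists d => // y Ay h.
rewrite /vdist; apply: (le_lt_trans (y := \sum_(j : J) e / (#|J|%:R + 1))).
  by apply: ler_sum => j _; apply: ltW; exact: H.
have SC : \sum_(j : J) e / (#|J|%:R + 1) = e / (#|J|%:R + 1) * #|J|%:R.
  by rewrite sumr_const mulr_natr.
rewrite SC.
set m := #|J|%:R.
have m0 : 0 <= m by exact: ler0n.
have -> : e / (m + 1) * m = e - e / (m + 1) by field; lra.
have : 0 < e / (m + 1) by apply: divr_gt0 => //; lra.
lra.
Qed.

End Cont.

Local Close Scope ring_scope.

Section G.
Variable n : nat.
Notation T := ('I_n.+1).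
Notation CV := (cg_vertex T).

Definition orig (v : T) : CV := inl (inl v).
Definition subv (s : {set T}) : CV := inl (inr s).
Definition leaf (v : T) (i : 'I_3) : CV := inr (v, i).

Lemma card_val_eq m k : #|[set w : 'I_m | val w == k]| = (k < m).
Proof.
case: ltnP => h.
  have -> : [set w : 'I_m | val w == k] = [set Ordinal h].
    by apply/setP => w; rewrite !inE -val_eqE.
  by rewrite cards1.
have -> : [set w : 'I_m | val w == k] = set0.
  apply/setP => w; rewrite !inE; apply/negP => /eqP ek.
  by move: (ltn_ord w); rewrite ek ltnNge h.
by rewrite cards0.
Qed.

Lemma card_val_eq_and m k b : #|[set w : 'I_m | (val w == k) && b]| = (b && (k < m)).
Proof.
case: b; last first.
  rewrite /= -(cards0 'I_m); apply: eq_card => w; rewrite !inE andbF //.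
by rewrite -card_val_eq; apply: eq_card => w; rewrite !inE andbT.
Qed.

Lemma deg_path (v : T) : deg (@path_adj n) v = ((0 < v) + (v < n))%N.
Proof.
rewrite /deg.
have -> : [set w | path_adj v w] =
   [set w : T | val w == v.-1 & 0 < v] :|: [set w : T | val w == v.+1].
  apply/setP => w; rewrite !inE /path_adj orbC; congr (_ || _); last by rewrite eq_sym.
  case: (nat_of_ord v) => [|k] /=; first by rewrite andbF.
  by rewrite andbT eqSS.
rewrite cardsU.
have -> : [set w : T | val w == v.-1 & 0 < v] :&: [set w : T | val w == v.+1] = set0.
  apply/setP => w; rewrite !inE; apply/negP => /andP[/andP[/eqP a _] /eqP b].
  by move: a; rewrite b /= => h; move: (leq_pred v); rewrite -h ltnn.
rewrite cards0 subn0 card_val_eq card_val_eq_and.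
case: (posnP v) => [v0|vp]; first by rewrite v0.
by rewrite /= !ltnS (leq_trans (leq_pred _) (ltnSE (ltn_ord v))).
Qed.

Definition other (v : T) (j : 'I_3) : CV :=
  match nat_of_ord j with
  | 0 => if (0 < v)%N then subv [set inord v.-1; v] else leaf v (inord 1)
  | 1 => if (v < n)%N then subv [set v; inord v.+1] else leaf v (inord ((v == 0 :> nat) + 1))
  | _ => leaf v (inord 0)
  end.

Definition E (p : T * 'I_3) : {set CV} := [set orig p.1; other p.1 p.2].

Lemma other_not_orig v j u : other v j != orig u.
Proof. by rewrite /other; case: (nat_of_ord j) => [|[|k]] //=; case: ifP. Qed.

Lemma orig_in_E v j : orig v \in E (v, j).
Proof. by rewrite !inE eqxx. Qed.

Lemma orig_E u p : orig u \in E p -> u = p.1.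
Proof.
rewrite !inE => /orP[/eqP[]//|/eqP h].
by move: (other_not_orig p.1 p.2 u); rewrite h eqxx.
Qed.


Lemma inord_val (m k : nat) : (k < m.+1)%N -> ((inord k : 'I_m.+1) : nat) = k.
Proof. exact: inordK. Qed.

Lemma path_edge (a b : T) : path_adj a b -> [set a; b] \in edges (@path_adj n).
Proof. by move=> h; rewrite inE; apply/existsP; exists a; apply/existsP; exists b; rewrite h eqxx. Qed.

Lemma adj_orig_other v j : clawed_adj (@path_adj n) (orig v) (other v j).
Proof.
have vn := ltn_ord v.
rewrite /other; case: j => [[|[|[|k]]] hj] //=.
- case: ifP => h /=.
    rewrite set22 /=; apply: path_edge.
    by rewrite /path_adj inordK ?prednK //; lia.
  rewrite eqxx /= (@inordK 2 1) // deg_path; lia.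
- case: ifP => h /=.
    rewrite set21 /=; apply: path_edge.
    by rewrite /path_adj inordK //; lia.
  rewrite eqxx /= (@inordK 2); last by case: (v == 0 :> nat).
  rewrite deg_path; lia.
- by rewrite eqxx /= (@inordK 2 0) // deg_path; lia.
Qed.

Lemma E_edge p : E p \in edges (@CP_adj n).
Proof.
rewrite inE; apply/existsP; exists (orig p.1); apply/existsP; exists (other p.1 p.2).
by rewrite eqxx andbT; exact: adj_orig_other.
Qed.


Lemma leaf_inj v v' i i' : leaf v i = leaf v' i' -> v = v' /\ (i : nat) = i'.
Proof. by case=> -> ->. Qed.

Definition o0 (v : T) : 'I_3 := inord 0.
Definition o1 (v : T) : 'I_3 := inord 1.
Definition o2 (v : T) : 'I_3 := inord 2.

Lemma other_ne01 v : other v (inord 0) != other v (inord 1).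
Proof.
have vn := ltn_ord v.
rewrite /other !(@inordK 2) //=.
case: ifP => h1; case: ifP => h2 //.
- apply/negP => /eqP [] /setP /(_ (inord v.-1)); rewrite !inE eqxx /=.
  move/esym/orP => [] /eqP /(congr1 val); rewrite /= !inordK; lia.
- apply/negP => /eqP /leaf_inj [_]; rewrite !(@inordK 2) //; try lia.
Qed.

Lemma other_ne02 v : other v (inord 0) != other v (inord 2).
Proof.
rewrite /other !(@inordK 2) //=.
case: ifP => h1 //; apply/negP => /eqP /leaf_inj [_]; rewrite !(@inordK 2) //.
Qed.

Lemma other_ne12 v : other v (inord 1) != other v (inord 2).
Proof.
rewrite /other !(@inordK 2) //=.
case: ifP => h1 //; apply/negP => /eqP /leaf_inj [_]; rewrite !(@inordK 2) //.
  by case: (v == 0 :> nat).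
by case: (v == 0 :> nat).
Qed.

Lemma ord3_cases (j : 'I_3) : [\/ j = inord 0, j = inord 1 | j = inord 2].
Proof.
case: j => [[|[|[|k]]] hj] //.
- by constructor 1; apply: val_inj; rewrite /= inordK.
- by constructor 2; apply: val_inj; rewrite /= inordK.
- by constructor 3; apply: val_inj; rewrite /= inordK.
Qed.

Lemma other_inj v j j' : other v j = other v j' -> j = j'.
Proof.
have h01 := other_ne01 v; have h02 := other_ne02 v; have h12 := other_ne12 v.
case: (ord3_cases j) => ->; case: (ord3_cases j') => -> //= e;
  move: h01 h02 h12; rewrite e eqxx //.
Qed.

Lemma E_inj : injective E.
Proof.
move=> [v j] [v' j'] e.
have := orig_in_E v j; rewrite e => /orig_E /= ev; subst v'.
congr pair; apply: (@other_inj v).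
have : other v j \in E (v, j') by rewrite -e !inE eqxx orbT.
rewrite !inE => /orP[/eqP h|/eqP //].
by move: (other_not_orig v j v); rewrite h eqxx.
Qed.

Lemma sub_case u (a b : T) : (a : nat).+1 = b -> u \in [set a; b] ->
  exists j, subv [set a; b] = other u j.
Proof.
move=> ab; rewrite !inE => /orP[/eqP ->|/eqP ->].
  have an : (a < n)%N by have := ltn_ord b; rewrite -ab ltnS.
  exists (inord 1); rewrite /other (@inordK 2 1) //= an.
  suff -> : (inord a.+1 : T) = b by [].
  by apply: val_inj; rewrite /= inordK ab.
have bp : (0 < b)%N by rewrite -ab.
exists (inord 0); rewrite /other (@inordK 2 0) //= bp.
suff -> : (inord b.-1 : T) = a by [].
apply: val_inj; rewrite /= inordK -ab //.
by apply: leq_trans (ltn_ord b); rewrite -ab.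
Qed.

Lemma adj_orig_ex u y : clawed_adj (@path_adj n) (orig u) y -> exists j, y = other u j.
Proof.
have un := ltn_ord u.
case: y => [[y|s]|[v i]] //=.
  case/andP => us; rewrite inE => /existsP[a /existsP[b /andP[ab /eqP es]]].
  subst s; case/orP: ab => /eqP ab; first exact: sub_case.
  by rewrite setUC; apply: sub_case => //; rewrite setUC.
case/andP => /eqP uv; subst v; rewrite deg_path => hi.
case: (ord3_cases i) => ei; subst i; move: hi; rewrite (@inordK 2) // => hi.
- by exists (inord 2); rewrite /other (@inordK 2 2).
- case: (posnP u) => u0.
    exists (inord 0); rewrite /other (@inordK 2 0) //= u0 /=.
    by congr leaf.
  have un' : (u < n)%N = false by move: hi; rewrite u0 /=; case: (u < n)%N.
  exists (inord 1); rewrite /other (@inordK 2 1) //= un'.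
  have -> : (u == 0 :> nat) = false by rewrite eqn0Ngt u0.
  by [].
- case: (posnP u) hi => u0 hi; last by move: hi; case: (u < n)%N.
  have un' : (u < n)%N = false by move: hi; rewrite u0 /=; case: (0 < n)%N.
  exists (inord 1); rewrite /other (@inordK 2 1) //= un' u0.
  by [].
Qed.

Lemma adj_sym (x y : cg_vertex T) : clawed_adj (@path_adj n) x y = clawed_adj (@path_adj n) y x.
Proof. by case: x => [[x|x]|[x i]]; case: y => [[y|y]|[y j]]. Qed.

Lemma edge_E e : e \in edges (@CP_adj n) -> exists p, e = E p.
Proof.
rewrite inE => /existsP[x /existsP[y /andP[a /eqP ->]]].
case: x a => [[u|s]|[u i]] a.
- by have [j ->] := adj_orig_ex a; exists (u, j).
- case: y a => [[w|t]|[w k]] a //.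
  rewrite /CP_adj adj_sym in a; have [j ->] := adj_orig_ex a; exists (w, j).
  by rewrite /E setUC.
- case: y a => [[w|t]|[w k]] a //.
  rewrite /CP_adj adj_sym in a; have [j ->] := adj_orig_ex a; exists (w, j).
  by rewrite /E setUC.
Qed.

Definition is_orig (w : CV) := if w is inl (inl _) then true else false.

Lemma in_E_other w p : ~~ is_orig w -> w \in E p -> w = other p.1 p.2.
Proof. by rewrite !inE => no /orP[/eqP e|/eqP //]; move: no; rewrite e. Qed.

Lemma memE w p : (p \in [set p | w \in E p]) = (w \in E p).
Proof. by rewrite [in LHS]inE. Qed.

Lemma card_nonorig w : ~~ is_orig w -> (#|[set p | w \in E p]| <= 2)%N.
Proof.
case: w => [[u|s]|[u i]] // _.
- have inj : {in [set p | subv s \in E p] &, injective (fun p : T * 'I_3 => p.1)}.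
    move=> [v j] [v' j'] /=; rewrite !memE => /(in_E_other (w := subv s) isT) /= e1 /(in_E_other (w := subv s) isT) /= e2 ev.
    subst v'; congr pair; apply: (@other_inj v); by rewrite -e1 -e2.
  rewrite -(card_in_imset inj).
  case: (set_0Vmem [set p | subv s \in E p]) => [->|[p pS]]; first by rewrite imset0 cards0.
  have := pS; rewrite memE => /(in_E_other (w := subv s)) /= => /(_ isT) e.
  have := adj_orig_other p.1 p.2; rewrite -e /= => /andP[_].
  rewrite inE => /existsP[a /existsP[b /andP[_ /eqP es]]].
  apply: leq_trans (_ : #|s| <= 2)%N; last by rewrite es cards2; case: (a != b).
  apply: subset_leq_card; apply/subsetP => v /imsetP[q qS ->].
  have := qS; rewrite memE => /(in_E_other (w := subv s)) /= => /(_ isT) e'.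
  by have := adj_orig_other q.1 q.2; rewrite -e' /= => /andP[].
- have inj : {in [set p | leaf u i \in E p] &, injective (fun p : T * 'I_3 => p.1)}.
    move=> [v j] [v' j'] /=; rewrite !memE => /(in_E_other (w := leaf u i) isT) /= e1 /(in_E_other (w := leaf u i) isT) /= e2 ev.
    subst v'; congr pair; apply: (@other_inj v); by rewrite -e1 -e2.
  rewrite -(card_in_imset inj).
  apply: leq_trans (_ : #|[set u]| <= 2)%N; last by rewrite cards1.
  apply: subset_leq_card; apply/subsetP => v /imsetP[q qS ->].
  have := qS; rewrite memE => /(in_E_other (w := leaf u i)) /= => /(_ isT) e'.
  by have := adj_orig_other q.1 q.2; rewrite -e' /= => /andP[/eqP -> _]; rewrite set11.
Qed.

Lemma card_orig u (P : pred (T * 'I_3)) : (exists j, ~~ P (u, j)) ->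
  (#|[set p | P p && (orig u \in E p)]| <= 2)%N.
Proof.
case=> j0 nj0.
apply: leq_trans (_ : #|(fun j => (u, j)) @: [set j | P (u, j)]| <= 2)%N.
  apply: subset_leq_card; apply/subsetP => -[v j]; rewrite inE => /andP[Pp /orig_E /= up].
  by subst v; apply/imsetP; exists j => //; rewrite inE.
apply: leq_trans (leq_imset_card _ _) _.
apply: leq_trans (_ : #|[set~ j0]| <= 2)%N; last by rewrite cardsC1 card_ord.
apply: subset_leq_card; apply/subsetP => j; rewrite !inE => Pj.
by apply/eqP => ej; move: nj0; rewrite -ej Pj.
Qed.

Lemma two_match_of (P : pred (T * 'I_3)) (F : {set {set CV}}) :
  (forall u, exists j, ~~ P (u, j)) ->
  F \subset E @: [set p | P p] -> two_matching (@CP_adj n) F.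
Proof.
move=> hP sF; apply/andP; split.
  apply/subsetP => e /(subsetP sF) /imsetP[p _ ->]; exact: E_edge.
apply/forallP => w.
apply: leq_trans (_ : #|E @: [set p | P p && (w \in E p)]| <= 2)%N.
  apply: subset_leq_card; apply/subsetP => e; rewrite inE => /andP[/(subsetP sF) /imsetP[p Pp ->] wp].
  by apply/imsetP; exists p => //; rewrite in_set in Pp; rewrite in_set Pp.
apply: leq_trans (leq_imset_card _ _) _.
case: (boolP (is_orig w)) => ow.
  case: w ow => [[u|//]|//] _; exact: card_orig.
apply: leq_trans (card_nonorig ow); apply: subset_leq_card.
by apply/subsetP => p; rewrite !inE => /andP[].
Qed.

End G.

Local Open Scope ring_scope.

Section Main.
Variable R : realType.
Variable n : nat.
Notation T := ('I_n.+1).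
Notation CV := (cg_vertex T).
Notation V := {set CV}.
Notation P := (T * 'I_3)%type.
Notation EE := (@E n).

Definition Xr : (V -> R) -> Prop := realization (M2 (@CP_adj n)).

Lemma X_ge0 x e : Xr x -> 0 <= x e.
Proof. by case=> h _ _; exact: h. Qed.

Lemma X_supp x e : Xr x -> x e != 0 -> exists p, e = EE p.
Proof.
case=> _ _ /andP[/subsetP sub _] nz.
apply: edge_E; apply: sub; by rewrite inE.
Qed.

Lemma X_decomp x e : Xr x -> x e = \sum_(p : P) (e == EE p)%:R * x (EE p).
Proof.
move=> Xx.
case: (eqVneq (x e) 0) => [x0|nz].
  rewrite x0 big1 // => p _; case: eqP => [ep|_]; first by rewrite -ep x0 mulr0.
  by rewrite mul0r.
have [p ep] := X_supp Xx nz.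
rewrite (bigD1 p) //= big1 ?ep ?eqxx ?mul1r ?addr0 // => q qp.
by rewrite (inj_eq (@E_inj n)) eq_sym (negbTE qp) mul0r.
Qed.

Lemma X_sum x : Xr x -> \sum_(p : P) x (EE p) = 1.
Proof.
move=> Xx; have [_ s1 _] := Xx.
rewrite -s1 (eq_bigr _ (fun e _ => X_decomp e Xx)) exchange_big /=.
apply: eq_bigr => p _.
rewrite (bigD1 (EE p)) //= eqxx mul1r big1 ?addr0 // => e ep.
by rewrite (negbTE ep) mul0r.
Qed.

Lemma X_zero x v : Xr x -> exists j, x (EE (v, j)) = 0.
Proof.
case=> _ _ /andP[_ /forallP /(_ (orig v))] hc.
case: (boolP [forall j, x (EE (v, j)) != 0]) => [/forallP all|].
  exfalso; move: hc; apply/negP; rewrite -ltnNge.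
  have : #|[set EE (v, j) | j : 'I_3]| = 3%N.
    rewrite card_imset ?card_ord // => j j' /(@E_inj n) [] //.
  move=> <-; apply: subset_leq_card; apply/subsetP => e /imsetP[j _ ->].
  rewrite in_set; apply/andP; split; last exact: orig_in_E.
  by rewrite in_set all.
by rewrite negb_forall => /existsP[j]; rewrite negbK => /eqP h; exists j.
Qed.


Definition mn (a b : R) := if a <= b then a else b.
Definition m3 (a b : R) := mn (mn a b) 0.
Definition wsel (a b c : R) (j : 'I_3) :=
  if (j : nat) == 0%N then a else if (j : nat) == 1%N then b else c.
Definition acoef (a b : R) (j : 'I_3) := wsel a b 0 j - m3 a b.
Definition sfun (a b : R) := a + b - 3 * m3 a b.

Lemma min_abs (a b : R) : mn a b = (a + b - `|a - b|) / 2.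
Proof.
rewrite /mn; case: (abs_cases (a - b)) => [][h ->]; case: leP => h'; lra.
Qed.

Lemma m3_props a b : [/\ m3 a b <= a, m3 a b <= b, m3 a b <= 0 &
   (m3 a b = a \/ m3 a b = b \/ m3 a b = 0)].
Proof.
rewrite /m3 /mn; case: (leP a b) => h1; [case: (leP a 0) => h2|case: (leP b 0) => h2]; (split; [lra|lra|lra|]);
  [left|right;right|right;left|right;right]; done.
Qed.

Lemma ord3_val (j : 'I_3) : [\/ (j : nat) = 0%N, (j : nat) = 1%N | (j : nat) = 2%N].
Proof. by case: j => [[|[|[|k]]] hj] //=; [constructor 1|constructor 2|constructor 3]. Qed.

Lemma wsel0 a b c (j : 'I_3) : (j : nat) = 0%N -> wsel a b c j = a.
Proof. by rewrite /wsel => ->. Qed.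
Lemma wsel1 a b c (j : 'I_3) : (j : nat) = 1%N -> wsel a b c j = b.
Proof. by rewrite /wsel => ->. Qed.
Lemma wsel2 a b c (j : 'I_3) : (j : nat) = 2%N -> wsel a b c j = c.
Proof. by rewrite /wsel => ->. Qed.

Lemma acoef_ge0 a b j : 0 <= acoef a b j.
Proof.
have [h1 h2 h3 _] := m3_props a b; rewrite /acoef.
case: (ord3_val j) => hj; [rewrite wsel0|rewrite wsel1|rewrite wsel2] => //; lra.
Qed.

Lemma sum3 (F : 'I_3 -> R) : \sum_(j < 3) F j = F (inord 0) + F (inord 1) + F (inord 2).
Proof.
rewrite !big_ord_recr big_ord0 /= add0r.
by congr (_ + _ + _); congr (F _); apply: val_inj; rewrite /= inordK.
Qed.

Lemma acoef_sum a b : \sum_(j < 3) acoef a b j = sfun a b.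
Proof.
rewrite sum3 /acoef /sfun wsel0 ?inordK // wsel1 ?inordK // wsel2 ?inordK //; ring.
Qed.

Lemma acoef_zero a b : exists j, acoef a b j = 0.
Proof.
have [_ _ _ [h|[h|h]]] := m3_props a b.
- by exists (inord 0); rewrite /acoef wsel0 ?inordK // h subrr.
- by exists (inord 1); rewrite /acoef wsel1 ?inordK // h subrr.
- by exists (inord 2); rewrite /acoef wsel2 ?inordK // h subrr.
Qed.

Lemma sfun_ge a b : `|a| <= sfun a b /\ `|b| <= sfun a b.
Proof.
have [h1 h2 h3 h4] := m3_props a b; rewrite /sfun.
case: (abs_cases a) => [][ha ->]; case: (abs_cases b) => [][hb ->]; split; lra.
Qed.

Lemma sfun_ge0 a b : 0 <= sfun a b.
Proof. have [h _] := sfun_ge a b; exact: le_trans (normr_ge0 a) h. Qed.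

Lemma acoef_diff a b (k : bool) :
  acoef a b (inord k) - acoef a b (inord 2) = if k then b else a.
Proof.
rewrite /acoef (@wsel2 a b 0 (inord 2)) ?inordK //; case: k.
  by rewrite wsel1 ?inordK //; rewrite /=; ring.
by rewrite wsel0 ?inordK //; rewrite /=; ring.
Qed.

Lemma acoef_scale x0 x1 x2 c j : 0 <= x0 -> 0 <= x1 -> 0 <= x2 -> 0 < c ->
  (x0 = 0 \/ x1 = 0 \/ x2 = 0) ->
  acoef ((x0 - x2) * c) ((x1 - x2) * c) j = wsel x0 x1 x2 j * c.
Proof.
move=> h0 h1 h2 c0 hz.
have m : m3 ((x0 - x2) * c) ((x1 - x2) * c) = - (x2 * c).
  have := m3_props ((x0 - x2) * c) ((x1 - x2) * c); set m := m3 _ _.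
  have a0 : 0 <= x0 * c by exact: mulr_ge0 (ltW c0).
  have a1 : 0 <= x1 * c by exact: mulr_ge0 (ltW c0).
  have a2 : 0 <= x2 * c by exact: mulr_ge0 (ltW c0).
  have e0 : (x0 - x2) * c = x0 * c - x2 * c by ring.
  have e1 : (x1 - x2) * c = x1 * c - x2 * c by ring.
  rewrite e0 e1; case: hz => [->|[->|->]]; rewrite ?mul0r => -[]; lra.
rewrite /acoef m; case: (ord3_val j) => hj;
  [rewrite !wsel0|rewrite !wsel1|rewrite !wsel2] => //; ring.
Qed.

Notation I := ('I_(2 * n + 1).+1).

Definition ix (v : T) (k : bool) : I := inord (k + (v : nat).*2).
Definition pv (i : I) : T := inord (i./2).
Definition pk (i : I) : 'I_3 := inord (odd i).

Lemma half_kv (k : bool) (v : nat) : (k + v.*2)./2 = v.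
Proof. by rewrite halfD odd_double andbF doubleK; case: k. Qed.

Lemma ix_val v k : ((ix v k : I) : nat) = (k + (v : nat).*2)%N.
Proof. rewrite inordK //; have := ltn_ord v; case: k => /=; lia. Qed.

Lemma pv_ix v k : pv (ix v k) = v.
Proof. apply: val_inj; rewrite /pv /= inordK ix_val ?half_kv // ix_val half_kv. Qed.

Lemma pk_ix v k : pk (ix v k) = inord k.
Proof. by rewrite /pk ix_val oddD odd_double addbF oddb. Qed.

Lemma ix_pv i : ix (pv i) (odd i) = i.
Proof.
apply: val_inj => /=; rewrite ix_val /pv inordK ?odd_double_half //.
have := ltn_ord i; rewrite -{1}(odd_double_half i); case: (odd i) => /=; lia.
Qed.

Definition Phi (x : V -> R) (i : I) := x (EE (pv i, pk i)) - x (EE (pv i, inord 2)).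
Definition Nsq (x : V -> R) := \sum_(i : I) Phi x i ^+ 2.
Definition f (x : V -> R) : I -> R := fun i => Phi x i / Num.sqrt (Nsq x).

Definition Dsum (y : I -> R) := \sum_(v : T) sfun (y (ix v false)) (y (ix v true)).
Definition gc (y : I -> R) (p : P) := acoef (y (ix p.1 false)) (y (ix p.1 true)) p.2.
Definition g (y : I -> R) : V -> R :=
  fun e => \sum_(p : P) (e == EE p)%:R * (gc y p / Dsum y).

Definition Sph : (I -> R) -> Prop := @sphere R (2 * n + 1).

Lemma Phi_ix x v k : Phi x (ix v k) = x (EE (v, inord k)) - x (EE (v, inord 2)).
Proof. by rewrite /Phi pv_ix pk_ix. Qed.

Lemma exists_pos (J : finType) (F : J -> R) : (forall j, 0 <= F j) ->
  \sum_(j : J) F j = 1 -> exists j, 0 < F j.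
Proof.
move=> ge s1; case: (boolP [exists j, 0 < F j]) => [/existsP[j h]|]; first by exists j.
rewrite negb_exists => /forallP al; exfalso.
have : \sum_(j : J) F j <= 0.
  apply: sumr_le0 => j _; have := al j; rewrite -leNgt //.
by rewrite s1; lra.
Qed.

Lemma Nsq_pos x : Xr x -> 0 < Nsq x.
Proof.
move=> Xx.
have [p pp] := exists_pos (fun p => X_ge0 (EE p) Xx) (X_sum Xx).
case: p pp => v j pp.
have [j0 z0] := X_zero v Xx.
have [k hk] : exists k : bool, Phi x (ix v k) != 0.
  case: (boolP (Phi x (ix v false) != 0)) => [h|]; first by exists false.
  case: (boolP (Phi x (ix v true) != 0)) => [h|]; first by exists true.
  rewrite !negbK !Phi_ix !subr_eq0 => /eqP e1 /eqP e0; exfalso.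
  have all0 : forall j', x (EE (v, j')) = 0.
    have z2 : x (EE (v, inord 2)) = 0.
      by case: (ord3_cases j0) z0 => ->; rewrite ?e0 ?e1.
    by move=> j'; case: (ord3_cases j') => ->; rewrite ?e0 ?e1.
  by move: pp; rewrite all0 ltxx.
rewrite /Nsq (bigD1 (ix v k)) //=.
apply: (lt_le_trans (y := Phi x (ix v k) ^+ 2)); first by rewrite exprn_even_gt0.
rewrite lerDl; apply: sumr_ge0 => i _; exact: sqr_ge0.
Qed.

Lemma D_pos y : Sph y -> 0 < Dsum y.
Proof.
rewrite /Sph /sphere => s1.
have [i hi] : exists i, y i != 0.
  case: (boolP [exists i, y i != 0]) => [/existsP[i h]|]; first by exists i.
  rewrite negb_exists => /forallP al; exfalso.
  move: s1; rewrite big1 => [|i _]; last by have := al i; rewrite negbK => /eqP ->; rewrite expr0n.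
  by move/eqP; rewrite eq_sym oner_eq0.
rewrite /Dsum (bigD1 (pv i)) //=.
have h1 : 0 < `|y i| by rewrite normr_gt0.
have h2 : `|y i| <= sfun (y (ix (pv i) false)) (y (ix (pv i) true)).
  have [a b] := sfun_ge (y (ix (pv i) false)) (y (ix (pv i) true)).
  by rewrite -[in Xr in `|y Xr|](ix_pv i); case: (odd i).
have h3 : 0 <= \sum_(v | v != pv i) sfun (y (ix v false)) (y (ix v true)).
  by apply: sumr_ge0 => v _; exact: sfun_ge0.
lra.
Qed.

Lemma g_E y p : g y (EE p) = gc y p / Dsum y.
Proof.
rewrite /g (bigD1 p) //= eqxx mul1r big1 ?addr0 // => q qp.
by rewrite (inj_eq (@E_inj n)) eq_sym (negbTE qp) mul0r.
Qed.

Lemma f_into x : Xr x -> Sph (f x).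
Proof.
move=> Xx; rewrite /Sph /sphere /f.
have N0 := Nsq_pos Xx.
under eq_bigr do rewrite expr_div_n sqr_sqrtr ?(ltW N0) //.
by rewrite -mulr_suml -/(Nsq x) mulfV // gt_eqF.
Qed.

Lemma g_ge0 y e : Sph y -> 0 <= g y e.
Proof.
move=> Sy; apply: sumr_ge0 => p _; apply: mulr_ge0; first exact: ler0n.
by apply: divr_ge0; [exact: acoef_ge0|exact: ltW (D_pos Sy)].
Qed.

Lemma sum_gc y : \sum_(p : P) gc y p = Dsum y.
Proof.
rewrite /Dsum -(eq_bigr _ (fun v _ => acoef_sum _ _)) pair_big /=.
by apply: eq_bigr => -[v j].
Qed.

Lemma g_into y : Sph y -> Xr (g y).
Proof.
move=> Sy; split.
- by move=> e; exact: g_ge0.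
- rewrite /g exchange_big /=.
  rewrite (eq_bigr (fun p => gc y p / Dsum y)).
    by rewrite -mulr_suml sum_gc mulfV // gt_eqF // D_pos.
  move=> p _; rewrite (bigD1 (EE p)) //= eqxx mul1r big1 ?addr0 // => e ep.
  by rewrite (negbTE ep) mul0r.
- apply: (@two_match_of n (fun p => gc y p != 0)).
    move=> u; have [j hj] := acoef_zero (y (ix u false)) (y (ix u true)).
    by exists j; rewrite /gc /= hj eqxx.
  apply/subsetP => e; rewrite inE => nz.
  case: (boolP [exists p, (e == EE p) && (gc y p != 0)]) => [/existsP[p /andP[/eqP -> h]]|].
    by apply/imsetP; exists p => //; rewrite inE.
  rewrite negb_exists => /forallP al; exfalso; move: nz; rewrite /g big1 ?eqxx // => p _.
  have := al p; rewrite negb_and negbK => /orP[/negbTE -> |/eqP ->]; first by rewrite mul0r.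
  by rewrite mul0r mulr0.
Qed.

Lemma Phi_g y i : Sph y -> Phi (g y) i = y i / Dsum y.
Proof.
move=> Sy; rewrite /Phi !g_E -mulrBl /gc /= /pk acoef_diff.
by rewrite -[in RHS](ix_pv i); case: (odd i).
Qed.

Lemma fg y i : Sph y -> f (g y) i = y i.
Proof.
move=> Sy; have D0 := D_pos Sy.
have N : Nsq (g y) = (Dsum y)^-1 ^+ 2.
  rewrite /Nsq (eq_bigr (fun i => y i ^+ 2 * (Dsum y)^-1 ^+ 2)); last first.
    by move=> j _; rewrite Phi_g // exprMn.
  by rewrite -mulr_suml Sy mul1r.
rewrite /f N sqrtr_sqr ger0_norm ?invr_ge0 ?(ltW D0) // Phi_g //.
by rewrite invrK mulfVK // gt_eqF.
Qed.

Lemma f_ix x v k : f x (ix v k) = (x (EE (v, inord k)) - x (EE (v, inord 2))) * (Num.sqrt (Nsq x))^-1.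
Proof. by rewrite /f Phi_ix. Qed.

Lemma wsel_x x v j :
  wsel (x (EE (v, inord 0))) (x (EE (v, inord 1))) (x (EE (v, inord 2))) j = x (EE (v, j)).
Proof.
case: (ord3_cases j) => ->; [rewrite wsel0|rewrite wsel1|rewrite wsel2] => //; by rewrite inordK.
Qed.

Lemma gc_f x p : Xr x -> gc (f x) p = x (EE p) * (Num.sqrt (Nsq x))^-1.
Proof.
move=> Xx; case: p => v j; rewrite /gc /= !f_ix.
have c0 : 0 < (Num.sqrt (Nsq x))^-1 by rewrite invr_gt0 sqrtr_gt0 Nsq_pos.
have [j0 z0] := X_zero v Xx.
rewrite (@acoef_scale (x (EE (v, inord 0))) (x (EE (v, inord 1))) (x (EE (v, inord 2)))) ?wsel_x //;
  try exact: X_ge0.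
by case: (ord3_cases j0) z0 => -> ->; [left|right;left|right;right].
Qed.

Lemma D_f x : Xr x -> Dsum (f x) = (Num.sqrt (Nsq x))^-1.
Proof.
move=> Xx; rewrite -sum_gc (eq_bigr _ (fun p _ => gc_f p Xx)) -mulr_suml X_sum //.
by rewrite mul1r.
Qed.

Lemma gf x e : Xr x -> g (f x) e = x e.
Proof.
move=> Xx; rewrite /g D_f // (X_decomp e Xx); apply: eq_bigr => p _.
have c0 : 0 < (Num.sqrt (Nsq x))^-1 by rewrite invr_gt0 sqrtr_gt0 Nsq_pos.
by rewrite gc_f // mulfK // gt_eqF.
Qed.

Section CtsLemmas.
Variable J : finType.
Implicit Types (A : (J -> R) -> Prop).

Lemma ctsA_mn A h1 h2 : ctsA A h1 -> ctsA A h2 -> ctsA A (fun x => mn (h1 x) (h2 x)).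
Proof.
move=> c1 c2; apply: (ctsA_ext (f := fun x => (h1 x + h2 x - `|h1 x - h2 x|) * 2^-1)).
  by move=> x; rewrite min_abs.
apply: ctsA_mul; last exact: ctsA_const.
apply: ctsA_add; first exact: ctsA_add.
by apply: ctsA_opp; apply: ctsA_abs; apply: ctsA_add => //; exact: ctsA_opp.
Qed.

Lemma ctsA_m3 A h1 h2 : ctsA A h1 -> ctsA A h2 -> ctsA A (fun x => m3 (h1 x) (h2 x)).
Proof. by move=> c1 c2; apply: ctsA_mn; [exact: ctsA_mn|exact: ctsA_const]. Qed.

Lemma ctsA_acoef A h1 h2 j : ctsA A h1 -> ctsA A h2 -> ctsA A (fun x => acoef (h1 x) (h2 x) j).
Proof.
move=> c1 c2; rewrite /acoef; apply: ctsA_add; last by apply: ctsA_opp; exact: ctsA_m3.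
rewrite /wsel; case: ((j : nat) == 0%N) => //; case: ((j : nat) == 1%N) => //.
exact: ctsA_const.
Qed.

Lemma ctsA_sfun A h1 h2 : ctsA A h1 -> ctsA A h2 -> ctsA A (fun x => sfun (h1 x) (h2 x)).
Proof.
move=> c1 c2; rewrite /sfun; apply: ctsA_add; first exact: ctsA_add.
apply: ctsA_opp; apply: ctsA_mul; [exact: ctsA_const|exact: ctsA_m3].
Qed.

End CtsLemmas.

Lemma ctsA_Phi i : ctsA Xr (fun x => Phi x i).
Proof. apply: ctsA_add; [exact: ctsA_proj|apply: ctsA_opp; exact: ctsA_proj]. Qed.

Lemma cont_f : cont_on Xr f.
Proof.
apply: cont_of_coords => i; rewrite /f; apply: ctsA_mul; first exact: ctsA_Phi.
apply: ctsA_inv; last by move=> x Xx; rewrite gt_eqF // sqrtr_gt0 Nsq_pos.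
apply: ctsA_sqrt; last by move=> x Xx; exact: Nsq_pos.
rewrite /Nsq; apply: ctsA_sum => j.
apply: (ctsA_ext (f := fun x => Phi x j * Phi x j)); first by move=> x; rewrite expr2.
apply: ctsA_mul; exact: ctsA_Phi.
Qed.

Lemma ctsA_D : ctsA Sph Dsum.
Proof. by apply: ctsA_sum => v; apply: ctsA_sfun; exact: ctsA_proj. Qed.

Lemma cont_g : cont_on Sph g.
Proof.
apply: cont_of_coords => e; rewrite /g; apply: ctsA_sum => p.
apply: ctsA_mul; first exact: ctsA_const.
apply: ctsA_mul; first by rewrite /gc; apply: ctsA_acoef; exact: ctsA_proj.
apply: ctsA_inv; first exact: ctsA_D.
by move=> y Sy; rewrite gt_eqF // D_pos.
Qed.

Lemma homot_id (J : finType) (A : (J -> R) -> Prop) (h : (J -> R) -> (J -> R)) :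
  (forall x, A x -> A (h x)) -> (forall x i, A x -> h x i = x i) ->
  homotopic A A h id.
Proof.
move=> hA hx.
exists (fun t x => if t == 0 then h x else x); split.
- by move=> t x _ Ax; case: eqP => _ //; exact: hA.
- move=> t x _ Ax e e0; exists e => // s y _ Ay _ dxy.
  have E1 : forall (t' : R) z, A z -> forall i, (if t' == 0 then h z else z) i = z i.
    by move=> t' z Az i; case: (t' == 0) => //; exact: hx.
  suff -> : vdist (if t == 0 then h x else x) (if s == 0 then h y else y) = vdist x y by [].
  by rewrite /vdist; apply: eq_bigr => i _; rewrite !E1.
- by move=> x _; rewrite eqxx.
- by move=> x _; rewrite oner_eq0.
Qed.

Theorem main_thm : homotopy_equiv Xr Sph.
Proof.
exists f, g; split.
- by split; [exact: cont_f|move=> x; exact: f_into].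
- by split; [exact: cont_g|move=> y; exact: g_into].
- apply: homot_id => [x Xx|x e Xx]; [exact: g_into (f_into Xx)|exact: gf].
- apply: homot_id => [y Sy|y i Sy]; [exact: f_into (g_into Sy)|exact: fg].
Qed.

End Main.
Unset Implicit Arguments.

Theorem mainTheorem10 (R : realType) (n : nat) :
  homotopy_equiv (@realization R _ (M2 (@CP_adj n))) (@sphere R (2 * n + 1)).
Proof. exact: (@main_thm R n). Qed.
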